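(* Let $m\ge1$ and let $\mathcal{Y}$ be a subset of the group $\mathbb{U}_m(\mathbb{Q})$ of upper unitriangular $m\times m$ rational matrices such that the heights of the matrices in $\mathcal{Y}$ are bounded by a constant. Let $s_1:=\min\{d\in\mathbb{Z}_{>0}: dY\text{ has integer entries for all }Y\in\mathcal{Y}\}$. Then for any positive integer $t$ and any $Y_1,\dots,Y_t\in\mathcal{Y}$, the matrix $s_1^{m-1}Y_1\cdots Y_t$ has integer entries.
   Context: Upper unitriangular means upper triangular with all diagonal entries equal to $1$. The height of a rational matrix is the maximum of the naive heights $\max(|p|,|q|)$ of its entries $p/q$ in lowest terms. *)

(* Defs.v *)
From HB Require Import structures.
From mathcomp Require Import all_boot all_order all_algebra.
Set Implicit Arguments. Unset Strict Implicit. Unset Printing Implicit Defensive.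
Import Order.TTheory GRing.Theory Num.Theory.
Local Open Scope ring_scope.

Definition rat_height (x : rat) : nat := maxn `|numq x|%N `|denq x|%N.

Definition mx_height (m n : nat) (A : 'M[rat]_(m, n)) : nat :=
  \max_(i < m) \max_(j < n) rat_height (A i j).

Definition upper_unitriangular (m : nat) (A : 'M[rat]_m) : Prop :=
  (forall i j : 'I_m, (j < i)%N -> A i j = 0) /\ (forall i : 'I_m, A i i = 1).

Definition integral_mx (m n : nat) (A : 'M[rat]_(m, n)) : Prop :=
  forall i j, A i j \is a Num.int.

Definition mx_prod (m : nat) (Ys : seq 'M[rat]_m) : 'M[rat]_m :=
  foldr (fun A B => A *m B) 1%:M Ys.

(* Main.v *)
Require Import Defs.
From HB Require Import structures.
From mathcomp Require Import all_boot all_order all_algebra.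
From mathcomp Require Import zify ring.
Import Order.TTheory GRing.Theory Num.Theory.
Local Open Scope ring_scope.

Definition QP {m : nat} (c : rat) (A : 'M[rat]_m) : Prop :=
  forall i j : 'I_m, ((j < i)%N -> A i j = 0) /\
                     ((i <= j)%N -> c ^+ (j - i) * A i j \is a Num.int).

Lemma QP1 (m : nat) (c : rat) : c \is a Num.int -> QP c (1%:M : 'M[rat]_m).
Proof.
move=> ci i j; rewrite mxE; split.
  by move=> lt; have /negPf -> : i != j by apply/eqP=> e; rewrite e ltnn in lt.
move=> le; apply: rpredM; first exact: rpredX.
by case: (i == j); rewrite ?rpred1 ?rpred0.
Qed.

Lemma QPM (m : nat) (c : rat) (A B : 'M[rat]_m) : c \is a Num.int -> QP c A -> QP c B -> QP c (A *m B).
Proof.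
move=> ci HA HB i j; rewrite mxE; split.
  move=> lt; apply: big1 => k _.
  case: (ltnP k i) => hk; first by rewrite (proj1 (HA i k)) ?mul0r.
  by rewrite (proj1 (HB k j)) ?mulr0 //; apply: leq_trans lt hk.
move=> le; rewrite mulr_sumr; apply: rpred_sum => k _.
case: (ltnP k i) => hk; first by rewrite (proj1 (HA i k)) ?mul0r ?mulr0 ?rpred0.
case: (ltnP j k) => hk2; first by rewrite (proj1 (HB k j)) ?mulr0 ?rpred0.
have -> : (j - i = (k - i) + (j - k))%N by lia.
rewrite exprD.
have -> : c ^+ (k - i) * c ^+ (j - k) * (A i k * B k j)
   = (c ^+ (k - i) * A i k) * (c ^+ (j - k) * B k j) by ring.
by apply: rpredM; [apply: (proj2 (HA i k)) | apply: (proj2 (HB k j))].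
Qed.

Theorem lemma8p3 (m : nat) (Yset : 'M[rat]_m -> Prop) (s1 : nat) :
  (1 <= m)%N ->
  (forall Y, Yset Y -> upper_unitriangular Y) ->
  (exists C : nat, forall Y, Yset Y -> (mx_height Y <= C)%N) ->
  (* s1 is the least positive integer d with d*Y integral for all Y in Yset *)
  (0 < s1)%N ->
  (forall Y, Yset Y -> integral_mx (s1%:R *: Y)) ->
  (forall d : nat, (0 < d)%N -> (forall Y, Yset Y -> integral_mx (d%:R *: Y)) ->
     (s1 <= d)%N) ->
  forall (t : nat) (Ys : seq 'M[rat]_m),
    (0 < t)%N -> size Ys = t -> (forall Y, Y \in Ys -> Yset Y) ->
    integral_mx ((s1 ^ (m - 1))%:R *: mx_prod Ys).
Proof.
move=> m1 hU _ s1p hI _ t Ys _ _ hYs.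
set c : rat := s1%:R.
have ci : c \is a Num.int by apply: rpred_nat.
have QY : forall Y, Yset Y -> QP c Y.
  move=> Y hY i j; have [h0 h1] := hU Y hY; split; first exact: h0.
  move=> le; case: (ltnP i j) => lt.
    have -> : (j - i = (j - i).-1.+1)%N by lia.
    rewrite exprSr -mulrA; apply: rpredM; first exact: rpredX.
    by have := hI Y hY i j; rewrite mxE.
  have e : i = j by apply: val_inj; apply/eqP; rewrite eqn_leq le lt.
  by rewrite e h1 subnn expr0 mulr1 rpred1.
have QP_all : QP c (mx_prod Ys).
  elim: Ys hYs => [|Y Ys IH] hYs /=; first exact: QP1.
  apply: QPM => //; first by apply: QY; apply: hYs; rewrite mem_head.
  by apply: IH => Z hZ; apply: hYs; rewrite inE hZ orbT.
move=> i j; rewrite mxE; have [h0 h1] := QP_all i j.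
case: (ltnP j i) => hij; first by rewrite h0 // mulr0 rpred0.
have -> : (m - 1 = (m - 1 - (j - i)) + (j - i))%N.
  have := ltn_ord j; lia.
rewrite natrX exprD -/c -mulrA; apply: rpredM; [exact: rpredX | exact: h1].
Qed.
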